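(* Let $\theta^0$ be a parameter vector at which Assumption 4 (GMFCQ, stated in the context) holds. If the first-order optimality condition (stated in the context) fails at $\theta^0$, then there exist a direction $D_\theta$ and positive constants $\epsilon_8,\epsilon_9$ such that $$\langle D_\theta,\nabla_\theta\mathcal{O}(\theta^0)\rangle<-\epsilon_8,\qquad \langle D_\theta,\nabla_\theta\text{dist}(b_{ij}(t,\theta^0),o_k)\rangle>\epsilon_9$$ for all $(i,j,k,t)$ with $\text{dist}(b_{ij}(t,\theta^0),o_k)=d_0$.
   Context: For a finite-dimensional parameter vector $\theta$ and $t\in[0,T]$, robot pieces $b_{ij}(t,\theta)\subset\mathbb{R}^3$ and obstacle pieces $o_k\subset\mathbb{R}^3$ are given (finitely many triples $(i,j,k)$) such that each $(t,\theta)\mapsto\text{dist}(b_{ij}(t,\theta),o_k)$ (shortest Euclidean distance) is differentiable; $d_0\ge0$ is a safe distance; $\mathcal{O}(\theta)$ is a differentiable cost. First-order optimality at $\theta^0$: for every direction $D_\theta$ with $\langle D_\theta,\nabla_\theta\text{dist}(b_{ij}(t,\theta^0),o_k)\rangle\ge0$ for all $(i,j,k,t)$ with $\text{dist}(b_{ij}(t,\theta^0),o_k)=d_0$, one has $\langle D_\theta,\nabla_\theta\mathcal{O}(\theta^0)\rangle\ge0$. Assumption 4 (GMFCQ at $\theta^0$): there exist a direction $D_\theta$ and $\epsilon_7>0$ with $\langle D_\theta,\nabla_\theta\text{dist}(b_{ij}(t,\theta^0),o_k)\rangle\ge\epsilon_7$ for all $(i,j,k,t)$ with $\text{dist}(b_{ij}(t,\theta^0),o_k)=d_0$.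 *)

(* Defs.v *)
From HB Require Import structures.
From mathcomp Require Import all_boot all_order all_algebra.
From mathcomp Require Import all_classical all_reals all_analysis.
Set Implicit Arguments. Unset Strict Implicit. Unset Printing Implicit Defensive.
Import Order.TTheory GRing.Theory Num.Theory.
Import numFieldNormedType.Exports.
Local Open Scope classical_set_scope.
Local Open Scope ring_scope.

Definition eucl_norm (R : realType) (x : 'rV[R]_3) : R :=
  Num.sqrt (\sum_(i < 3) x ord0 i ^+ 2).

Definition setdist (R : realType) (A B : set 'rV[R]_3) : R :=
  inf [set eucl_norm (x - y) | x in A & y in B].

Definition grad (R : realType) (n : nat) (f : 'rV[R]_n -> R) (th : 'rV[R]_n)
  : 'rV[R]_n := \row_(i < n) ('D_(delta_mx ord0 i) f th).

Definition dotp (R : realType) (n : nat) (u v : 'rV[R]_n) : R :=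
  \sum_(i < n) u ord0 i * v ord0 i.

(* Main.v *)
Require Import Defs.
From HB Require Import structures.
From mathcomp Require Import all_boot all_order all_algebra.
From mathcomp Require Import all_classical all_reals all_analysis.
From mathcomp Require Import ring lra.
Import Order.TTheory GRing.Theory Num.Theory.
Import numFieldNormedType.Exports.
Local Open Scope classical_set_scope.
Local Open Scope ring_scope.

Lemma dotpDZ (R : realType) (n : nat) (u v w : 'rV[R]_n) (s : R) :
  dotp (u + s *: v) w = dotp u w + s * dotp v w.
Proof.
rewrite /dotp mulr_sumr -big_split /=; apply: eq_bigr => i _.
by rewrite !mxE mulrDl mulrA.
Qed.

Theorem lemma8 (R : realType) (n : nat) (I J K : finType) (T d0 : R)
  (b : I -> J -> R -> 'rV[R]_n -> set 'rV[R]_3) (o : K -> set 'rV[R]_3)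
  (cost : 'rV[R]_n -> R) (theta0 : 'rV[R]_n)
  (hd0 : 0 <= d0)
  (hdist : forall i j k (z : R * 'rV[R]_n), 0 <= z.1 <= T ->
      differentiable (fun w : R * 'rV[R]_n => setdist (b i j w.1 w.2) (o k)) z)
  (hcost : forall th, differentiable cost th)
  (GMFCQ : exists (D : 'rV[R]_n) (eps7 : R), 0 < eps7 /\
      forall i j k t, 0 <= t <= T -> setdist (b i j t theta0) (o k) = d0 ->
        eps7 <= dotp D (grad (fun th => setdist (b i j t th) (o k)) theta0))
  (not_first_order_optimal : ~ (forall D : 'rV[R]_n,
      (forall i j k t, 0 <= t <= T -> setdist (b i j t theta0) (o k) = d0 ->
        0 <= dotp D (grad (fun th => setdist (b i j t th) (o k)) theta0)) ->
      0 <= dotp D (grad cost theta0))) :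
  exists (D : 'rV[R]_n) (eps8 eps9 : R), 0 < eps8 /\ 0 < eps9 /\
    dotp D (grad cost theta0) < - eps8 /\
    (forall i j k t, 0 <= t <= T -> setdist (b i j t theta0) (o k) = d0 ->
       eps9 < dotp D (grad (fun th => setdist (b i j t th) (o k)) theta0)).
Proof.
case: GMFCQ => D2 [e7 [e7p H2]].
have [D1 [H1b H1a]] : exists (D1 : 'rV[R]_n),
   dotp D1 (grad cost theta0) < 0 /\
   forall i j k t, 0 <= t <= T -> setdist (b i j t theta0) (o k) = d0 ->
        0 <= dotp D1 (grad (fun th => setdist (b i j t th) (o k)) theta0).
  apply: contrapT => H; apply: not_first_order_optimal => D HD.
  case: (leP 0 (dotp D (grad cost theta0))) => // Hlt.
  by exfalso; apply: H; exists D.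
set a := dotp D1 (grad cost theta0) in H1b *.
set c := dotp D2 (grad cost theta0).
set s := (- a) / (2 * (`|c| + 1)).
have hc : 0 < `|c| + 1 by rewrite ltr_wpDl.
have sp : 0 < s by rewrite /s divr_gt0 // ?oppr_gt0 // mulr_gt0.
exists (D1 + s *: D2), (- a / 2), (s * e7 / 2); split; first by rewrite divr_gt0 // oppr_gt0.
split; first by rewrite divr_gt0 // mulr_gt0.
split.
  rewrite dotpDZ -/a -/c.
  have : s * c <= s * `|c| by rewrite ler_pM2l // real_ler_norm // num_real.
  have : s * `|c| < - a / 2.
    have -> : - a / 2 = s * (`|c| + 1) by rewrite /s; field; rewrite gt_eqF.
    by rewrite ltr_pM2l // ltrDl.
  lra.
move=> i j k t ht hd; rewrite dotpDZ.
have := H1a i j k t ht hd; have := H2 i j k t ht hd.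
have : s * e7 <= s * dotp D2 (grad (fun th => setdist (b i j t th) (o k)) theta0).
  by rewrite ler_pM2l // H2.
have : 0 < s * e7 by rewrite mulr_gt0.
lra.
Qed.
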